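(* Let $G$ be a $(2K_2, K_5-e)$-free graph. Then $\chi(G)\le\omega(G)+4$.
   Context: All graphs are finite, simple and undirected. $2K_2$ is the disjoint union of two edges; $K_5-e$ is the complete graph on 5 vertices minus one edge. A graph is $\mathcal F$-free if it has no induced subgraph isomorphic to a member of $\mathcal F$. $\chi$ is the chromatic number and $\omega$ the clique number. *)

(* Defs.v *)
From mathcomp Require Import all_boot.
Set Implicit Arguments. Unset Strict Implicit. Unset Printing Implicit Defensive.

Definition simple_graph (T : finType) (e : rel T) : Prop :=
  symmetric e /\ irreflexive e.

Definition has_induced_2K2 (T : finType) (e : rel T) : Prop :=
  exists a b c d : T,
    uniq [:: a; b; c; d] /\ e a b /\ e c d /\
    ~~ e a c /\ ~~ e a d /\ ~~ e b c /\ ~~ e b d.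

Definition has_induced_K5_minus_e (T : finType) (e : rel T) : Prop :=
  exists x : 'I_5 -> T,
    injective x /\ ~~ e (x ord0) (x (inord 1)) /\
    (forall i j : 'I_5, i != j ->
       ~~ ([set i; j] == [set ord0; inord 1]) -> e (x i) (x j)).

Definition is_clique (T : finType) (e : rel T) (A : {set T}) : bool :=
  [forall x in A, forall y in A, (x != y) ==> e x y].

Definition clique_number (T : finType) (e : rel T) : nat :=
  \max_(A : {set T} | is_clique e A) #|A|.

Definition colorable (T : finType) (e : rel T) (k : nat) : bool :=
  [exists f : {ffun T -> 'I_k}, forall x, forall y, e x y ==> (f x != f y)].

Lemma colorable_exists (T : finType) (e : rel T) :
  irreflexive e -> exists k, colorable e k.
Proof.
move=> irr; exists #|T|; apply/existsP; exists [ffun x => enum_rank x].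
apply/forallP=> x; apply/forallP=> y; apply/implyP=> exy.
rewrite !ffunE; apply/negP=> /eqP /enum_rank_inj exy'.
by subst y; rewrite irr in exy.
Qed.

Definition chromatic_number (T : finType) (e : rel T)
  (irr : irreflexive e) : nat := ex_minn (colorable_exists irr).

(* Main.v *)
Require Import Defs.
From mathcomp Require Import all_boot zify.
Set Implicit Arguments. Unset Strict Implicit. Unset Printing Implicit Defensive.

Lemma colorable_cover (T : finType) (e : rel T) k (F : nat -> pred T) :
  (forall i u v, i < k -> F i u -> F i v -> ~~ e u v) ->
  (forall v, exists2 i, i < k & F i v) -> colorable e k.
Proof.
move=> Hind Hcov.
pose g v := find (fun i => F i v) (iota 0 k).
have Hh v : has (fun i => F i v) (iota 0 k).
  by case: (Hcov v) => i ik Fi; apply/hasP; exists i => //; rewrite mem_iota.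
have Hlt v : g v < k by have := Hh v; rewrite has_find size_iota.
have HF v : F (g v) v.
  have := nth_find 0 (Hh v); rewrite nth_iota ?add0n //; exact: Hlt.
apply/existsP; exists [ffun v => Ordinal (Hlt v)].
apply/forallP=> x; apply/forallP=> y; apply/implyP=> exy; rewrite !ffunE.
apply/negP=> /eqP /(congr1 val) /= gxy.
by have := Hind (g y) x y (Hlt y); rewrite -{1}gxy => /(_ (HF x) (HF y)); rewrite exy.
Qed.

Lemma chi_le (T : finType) (e : rel T) (eirr : irreflexive e) k :
  colorable e k -> chromatic_number eirr <= k.
Proof. by rewrite /chromatic_number; case: ex_minnP => m _ H /H. Qed.

Lemma is_cliqueP (T : finType) (e : rel T) (A : {set T}) :
  reflect (forall x y, x \in A -> y \in A -> x != y -> e x y) (is_clique e A).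
Proof.
apply: (iffP idP).
  move=> /forallP H x y xA yA xy.
  by move: (H x); rewrite xA /= => /forallP /(_ y); rewrite yA xy.
move=> H; apply/forallP=> x; apply/implyP=> xA; apply/forallP=> y.
by apply/implyP=> yA; apply/implyP; apply: H.
Qed.

Lemma clique_add (T : finType) (e : rel T) (esym : symmetric e) (A : {set T}) v :
  is_clique e A -> (forall x, x \in A -> e v x) -> v \notin A ->
  is_clique e (v |: A) /\ #|v |: A| = #|A|.+1.
Proof.
move=> /is_cliqueP HA Hv vA; split; last by rewrite cardsU1 vA.
apply/is_cliqueP=> x y; rewrite !in_setU1.
case/orP=> [/eqP->|xA]; case/orP=> [/eqP->|yA] //; first by rewrite eqxx.
- by move=> _; apply: Hv.
- by move=> _; rewrite esym; apply: Hv.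
- by apply: HA.
Qed.

Lemma core (T : finType) (e : rel T) (esym : symmetric e) (eirr : irreflexive e)
  (n2 : ~ has_induced_2K2 e) (n5 : ~ has_induced_K5_minus_e e)
  (s : seq T) (x0 : T) (suniq : uniq s)
  (scl : forall x y, x \in s -> y \in s -> x != y -> e x y)
  (smax : forall B, is_clique e B -> #|B| <= size s)
  (spos : 0 < size s) :
  exists2 k, colorable e k & k <= size s + 4.
Proof.
set w := size s in smax spos *.
pose q i := nth x0 s i.
have qs i : i < w -> q i \in s by move=> iw; apply: mem_nth.
have qinj i j : i < w -> j < w -> (q i == q j) = (i == j).
  by move=> iw jw; apply: nth_uniq.
have qcl i j : i < w -> j < w -> i != j -> e (q i) (q j).
  by move=> iw jw ij; apply: scl; rewrite ?qs ?qinj.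
have sq v : v \in s -> exists2 i, i < w & v = q i.
  by move=> vs; exists (index v s); rewrite ?index_mem // /q nth_index.
have nq v i : v \notin s -> i < w -> (v == q i) = false.
  by move=> vs iw; apply/negP=> /eqP vq; move: vs; rewrite vq qs.
have L0 v : v \notin s -> exists2 d, d < w & ~~ e v (q d).
  move=> vs; case: (boolP (all (e v) s)) => [/allP Hall|].
    have sc : is_clique e [set x in s].
      by apply/is_cliqueP=> x y; rewrite !inE; apply: scl.
    have [vc vcard] : is_clique e (v |: [set x in s]) /\
        #|v |: [set x in s]| = #|[set x in s]|.+1.
      apply: clique_add => //; [by move=> x; rewrite inE; apply: Hall | by rewrite inE].
    have := smax _ vc; rewrite vcard cardsE.
    by move/card_uniqP: suniq => ->; rewrite ltnn.
  case/allPn=> u us euv; case: (sq u us) => d dw ud; exists d => //; by rewrite -ud.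
have L1 v a b c : v \notin s -> a < w -> b < w -> c < w -> a != b -> a != c ->
    b != c -> e v (q a) -> e v (q b) -> e v (q c) -> False.
  move=> vs aw bw cw ab ac bc hva hvb hvc.
  case: (L0 v vs) => d dw hvd.
  have da : d != a by apply: contraNneq hvd => ->.
  have db : d != b by apply: contraNneq hvd => ->.
  have dc : d != c by apply: contraNneq hvd => ->.
  have hda := qcl d a dw aw da; have hdb := qcl d b dw bw db.
  have hdc := qcl d c dw cw dc; have hab := qcl a b aw bw ab.
  have hac := qcl a c aw cw ac; have hbc := qcl b c bw cw bc.
  pose l := [:: v; q d; q a; q b; q c].
  have lu : uniq l.
    rewrite /l /= !inE !(nq v) // !qinj //; lia.
  have Hset : forall i j : 'I_5, ((val i == 0) && (val j == 1)) ||
      ((val i == 1) && (val j == 0)) -> [set i; j] == [set ord0; inord 1].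
    move=> i j /orP [] /andP [/eqP hi /eqP hj].
      have -> : i = ord0 by apply: val_inj.
      by have -> : j = inord 1 by apply: val_inj; rewrite /= inordK.
    have -> : j = ord0 by apply: val_inj.
    have -> : i = inord 1 by apply: val_inj; rewrite /= inordK.
    by apply/eqP/setP=> z; rewrite !inE orbC.
  case: n5; exists (fun i : 'I_5 => nth v l i); split.
    by move=> i j /eqP; rewrite nth_uniq // => /eqP; apply: val_inj.
  split; first by rewrite inordK.
  move=> i j ij nset.
  have H : ~~ (((val i == 0) && (val j == 1)) || ((val i == 1) && (val j == 0))).
    by apply: contra nset; apply: Hset.
  have ij' : val i != val j by [].
  case: i j ij' H {ij nset} => [[|[|[|[|[|i]]]]] hi] [[|[|[|[|[|j]]]]] hj] //= _ _;
    first [done | by rewrite esym].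
pose Pp i j v := [&& v \notin s, ~~ e v (q i) & ~~ e v (q j)].
have P2 i j u v : i < w -> j < w -> i != j -> Pp i j u -> Pp i j v -> ~~ e u v.
  move=> iw jw ij /and3P [us hui huj] /and3P [vs hvi hvj]; apply/negP=> euv.
  have uv : u != v by apply: contraTneq euv => ->; rewrite eirr.
  apply: n2; exists u, v, (q i), (q j).
  rewrite /= !inE !(nq u) ?(nq v) // qinj // ij orbF (negbTE uv); split => //; split => //.
  by split; [exact: (qcl i j iw jw ij)|]; do !split.
pose Cc i j v := (v == q i) || Pp i j v.
have C2 i j u v : i < w -> j < w -> i != j -> Cc i j u -> Cc i j v -> ~~ e u v.
  move=> iw jw ij /orP [/eqP ->|hu] /orP [/eqP ->|hv]; first by rewrite eirr.
  - by case/and3P: hv => _ + _; rewrite esym.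
  - by case/and3P: hu.
  - exact: P2 hu hv.
pose Wp i v := ~~ e v (q i) && all (fun x => (x == q i) || e v x) s.
have Wns i u v : i < w -> Wp i u -> e u v -> Wp i v -> u \notin s.
  move=> iw /andP [hui _] euv /andP [hvi _]; apply/negP=> us.
  case: (eqVneq u (q i)) => [ui|ui].
    by move: hvi; rewrite -ui esym euv.
  by move: hui; rewrite scl ?qs.
have W2 i u v : i < w -> Wp i u -> Wp i v -> ~~ e u v.
  move=> iw hu hv; apply/negP=> euv.
  have us := Wns i u v iw hu euv hv.
  have vs : v \notin s by apply: (Wns i v u iw hv); rewrite // esym.
  pose A0 := [set x in s] :\ q i.
  have A0c : is_clique e A0.
    by apply/is_cliqueP=> x y; rewrite !inE => /andP [_ xs] /andP [_ ys]; apply: scl.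
  have A0card : #|A0| = w.-1.
    have := cardsD1 (q i) [set x in s]; rewrite cardsE inE qs //.
    by move/card_uniqP: (suniq) => ->; rewrite /w => ->.
  have adj z x : Wp i z -> x \in A0 -> e z x.
    case/andP=> _ /allP H; rewrite !inE => /andP [xq xs].
    by move: (H x xs); rewrite (negbTE xq).
  have [c1 k1] : is_clique e (v |: A0) /\ #|v |: A0| = #|A0|.+1.
    apply: clique_add => //; first by move=> x; apply: adj.
    by rewrite !inE negb_and (negPf vs) orbT.
  have [c2 k2] : is_clique e (u |: (v |: A0)) /\ #|u |: (v |: A0)| = #|v |: A0|.+1.
    apply: clique_add => //.
      by move=> x; rewrite in_setU1 => /orP [/eqP ->|]; [|apply: adj].
    rewrite in_setU1 negb_or; apply/andP; split.
      by apply: contraTneq euv => ->; rewrite eirr.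
    by rewrite !inE negb_and (negPf us) orbT.
  by have := smax _ c2; rewrite k2 k1 A0card prednK // ltnn.
have qW m : m < w -> Wp m (q m).
  move=> mw; rewrite /Wp eirr /=; apply/allP=> x xs.
  case: eqVneq => //= xq; apply: scl; rewrite ?qs //; by rewrite eq_sym.
case: (leqP w 3) => hw.
  pose F i v := if i < 3 then (i < w) && Wp i v else if i == 3 then (1 < w) && Pp 0 1 v
    else if i == 4 then (2 < w) && Pp 0 2 v else if i == 5 then (2 < w) && Pp 1 2 v
    else false.
  exists w.+3; last by (try clear F);  (try clear F); lia.
  apply: (colorable_cover (F := F)).
    move=> i u v ik; rewrite /F; case: ifP => i3.
      by move=> /andP [iw hu] /andP [_ hv]; apply: W2 hv.
    case: ifP => _.
      by move=> /andP [h hu] /andP [_ hv]; apply: (P2 0 1) hu hv.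
    case: ifP => _.
      by move=> /andP [h hu] /andP [_ hv]; apply: (P2 0 2) hu hv => //;  (try clear F); lia.
    case: ifP => _ //.
    by move=> /andP [h hu] /andP [_ hv]; apply: (P2 1 2) hu hv => //;  (try clear F); lia.
  move=> v; case: (boolP (v \in s)) => vs.
    case: (sq v vs) => m mw ->; exists m; first by (try clear F);  (try clear F); lia.
    have m3 : m < 3 by (try clear F); lia.
    by rewrite /F m3 mw qW.
  case: (L0 v vs) => d dw hvd.
  case: (boolP (all (fun x => (x == q d) || e v x) s)) => hall.
    exists d; first by (try clear F);  (try clear F); lia.
    have d3 : d < 3 by (try clear F); lia.
    by rewrite /F d3 dw /Wp hvd hall.
  case/allPn: hall => x xs; rewrite negb_or => /andP [xd hvx].
  case: (sq x xs) => d' d'w xe; subst x.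
  have dd' : d' != d by rewrite -qinj.
  have HP a b : a < b -> b < w -> ~~ e v (q a) -> ~~ e v (q b) -> Pp a b v.
    by move=> _ _ ha hb; rewrite /Pp vs ha hb.
  have Hpair a b : a < b -> b < w -> ~~ e v (q a) -> ~~ e v (q b) ->
      exists2 i, i < w.+3 & F i v.
    move=> ab bw ha hb; have hP := HP a b ab bw ha hb.
    have b3 : b < 3 by (try clear F);  (try clear F); lia.
    case: a b ab bw b3 ha hb hP => [|[|a]] [|[|[|b]]] //= ab bw b3 ha hb hP.
    - by exists 3; [clear F; lia | rewrite /F /= bw hP].
    - by exists 4; [clear F; lia | rewrite /F /= bw hP].
    - by exists 5; [clear F; lia | rewrite /F /= bw hP].
  case: (ltngtP d d') dd' => // hlt _.
    exact: (Hpair d d').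
  exact: (Hpair d' d).
pose F i v := if i < w then Cc i (i.+1 %% w) v else if i == w then Pp 0 2 v
  else if i == w.+1 then Pp 1 3 v else false.
exists w.+2; last by (try clear F);  (try clear F); lia.
have modS i : i < w -> i.+1 %% w < w /\ i != i.+1 %% w.
  move=> iw; split; first by rewrite ltn_pmod.
  case: (ltnP i.+1 w) => h; first by rewrite modn_small //;  (try clear F); lia.
  have -> : i.+1 = w by (try clear F);  (try clear F); lia.
  rewrite modnn;  (try clear F); lia.
apply: (colorable_cover (F := F)).
  move=> i u v ik; rewrite /F; case: ifP => iw.
    by case: (modS i iw) => h1 h2; apply: C2.
  case: ifP => _; first by apply: (P2 0 2) => //;  (try clear F); lia.
  case: ifP => _ //; by apply: (P2 1 3) => //;  (try clear F); lia.
move=> v; case: (boolP (v \in s)) => vs.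
  case: (sq v vs) => m mw ->; exists m; first by (try clear F);  (try clear F); lia.
  by rewrite /F mw /Cc eqxx.
have key i : i < w -> ~~ e v (q i) -> ~~ e v (q (i.+1 %% w)) ->
    exists2 j, j < w.+2 & F j v.
  move=> iw h1 h2; exists i; first by (try clear F);  (try clear F); lia.
  by rewrite /F iw /Cc /Pp vs h1 h2 orbT.
have keyS i : i.+1 < w -> ~~ e v (q i) -> ~~ e v (q i.+1) ->
    exists2 j, j < w.+2 & F j v.
  move=> iw h1 h2; apply: (key i (ltnW iw) h1).
  by rewrite modn_small.
have w1 : 1 < w by (try clear F); lia.
have w2 : 2 < w by (try clear F); lia.
case h0: (e v (q 0)); case h1: (e v (q 1)); case h2: (e v (q 2));
  case h3: (e v (q 3));
  try (by exfalso; apply: (L1 v 0 1 2));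
  try (by exfalso; apply: (L1 v 0 1 3));
  try (by exfalso; apply: (L1 v 0 2 3));
  try (by exfalso; apply: (L1 v 1 2 3));
  try (by apply: (keyS 0) => //; rewrite ?h0 ?h1;  (try clear F); lia);
  try (by apply: (keyS 1) => //; rewrite ?h1 ?h2;  (try clear F); lia);
  try (by apply: (keyS 2) => //; rewrite ?h2 ?h3;  (try clear F); lia);
  try (by exists w => //; rewrite /F ltnn eqxx /Pp vs h0 h2);
  try (by exists w.+1 => //; rewrite /F ltnNge leqnSn /= eqn_leq ltnn /= eqxx /Pp vs h1 h3).
case: (ltngtP w 4) => hw4; first by (try clear F); lia.
  apply: (key 3) => //; rewrite ?h3 //.
  rewrite modn_small //; case h4: (e v (q 4)) => //.
  by exfalso; apply: (L1 v 1 2 4).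
apply: (key 3) => //; first by rewrite h3.
have -> : 4 %% w = 0 by rewrite -hw4 modnn.
by rewrite h0.
Qed.

Theorem corollary3p10 (T : finType) (e : rel T)
  (esym : symmetric e) (eirr : irreflexive e) :
  ~ has_induced_2K2 e -> ~ has_induced_K5_minus_e e ->
  chromatic_number eirr <= clique_number e + 4.
Proof.
move=> n2 n5.
case: (pickP (fun _ : T => true)) => [x0 _ | hT]; last first.
  apply: leq_trans (chi_le eirr (k:=0) _) _ => //.
  apply: (colorable_cover (F := fun _ _ => false)) => // v.
  by move: (hT v).
have Hpos : 0 < #|(fun B : {set T} => is_clique e B)|.
  apply/card_gt0P; exists set0; rewrite /in_mem /=.
  by apply/is_cliqueP=> x y; rewrite inE.
have [A Acl Amax] := @eq_bigmax_cond _ (fun B : {set T} => is_clique e B)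
  (fun B => #|B|) Hpos.
have cn : clique_number e = #|A| by exact: Amax.
have smax B : is_clique e B -> #|B| <= size (enum A).
  move=> Bcl; rewrite -cardE -cn; exact: (@leq_bigmax_cond _ (fun B : {set T} => is_clique e B) (fun B => #|B|) B Bcl).
have scl x y : x \in enum A -> y \in enum A -> x != y -> e x y.
  by rewrite !mem_enum; apply/is_cliqueP.
have spos : 0 < size (enum A).
  apply: leq_trans (smax [set x0] _); first by rewrite cards1.
  by apply/is_cliqueP=> x y; rewrite !inE => /eqP -> /eqP ->; rewrite eqxx.
have [k kc kle] := core esym eirr n2 n5 x0 (enum_uniq _) scl smax spos.
apply: leq_trans (chi_le eirr kc) _.
by rewrite cn cardE.
Qed.
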